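(* Let $\mathrm X$ be a locally compact Hausdorff space and $\kappa:\mathrm X\times\mathrm X\to(-\infty,\infty]$ a lower semicontinuous function which is nonnegative unless $\mathrm X\times\mathrm X$ is compact. Assume that $\kappa(x,y)$ is (finite and) continuous for $x\ne y$ and that $\kappa$ has the property $(\infty_{\mathrm X})$: for every $\varepsilon>0$ and every compact $K\subset\mathrm X$ there is a compact $K'\subset\mathrm X$ with $|\kappa(x,y)|<\varepsilon$ for all $x\in K$, $y\in\mathrm X\setminus K'$. Fix a closed set $F\subset\mathrm X$, a closed subset $Q$ of $\mathrm X\setminus F$, and $b\in(0,\infty)$. Then the map $(x,\nu)\mapsto\kappa(x,\nu)=\int\kappa(x,y)\,d\nu(y)$ is continuous on $Q\times\bigl(\mathfrak M^+_F\cap\mathfrak M_b\bigr)$ with respect to the product topology, where $Q$ carries the topology induced from $\mathrm X$ and $\mathfrak M^+_F\cap\mathfrak M_b$ the topology induced by the vague topology of $\mathfrak M$.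
   Context: $\mathfrak M$ is the space of real Radon measures on $\mathrm X$ with the vague topology (pointwise convergence on continuous compactly supported functions). $\mathfrak M^+_F$ is the set of nonnegative Radon measures concentrated on $F$ (for closed $F$: supported in $F$), and $\mathfrak M_b=\{\nu\in\mathfrak M:|\nu|(\mathrm X)\le b\}$. *)

(* Defs.v *)
From HB Require Import structures.
From mathcomp Require Import all_boot all_order all_algebra.
From mathcomp Require Import all_classical all_reals all_analysis.
Set Implicit Arguments. Unset Strict Implicit. Unset Printing Implicit Defensive.
Import Order.TTheory GRing.Theory Num.Theory.
Import numFieldNormedType.Exports.
Local Open Scope classical_set_scope.
Local Open Scope ring_scope.

Definition borel (X : ptopologicalType) : measurableType (@open X).-sigma :=
  g_sigma_algebraType (@open X).

Section defs.
Context {X : ptopologicalType} {R : realType}.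
Local Open Scope ereal_scope.

Definition radon (mu : {measure set (borel X) -> \bar R}) : Prop :=
  [/\ (forall K : set X, compact K -> mu K < +oo),
      (forall A : set (borel X), measurable A ->
         mu A = ereal_inf [set mu U | U in [set U : set X | open U /\ A `<=` U]]) &
      (forall U : set X, open U ->
         mu U = ereal_sup [set mu K | K in [set K : set X | compact K /\ K `<=` U]])].

Definition in_MFb (F : set X) (b : R) (nu : {measure set (borel X) -> \bar R}) : Prop :=
  [/\ radon nu, nu (~` F) = 0 & nu setT <= b%:E].

Definition Cc (f : X -> R) : Prop :=
  continuous f /\ compact (closure [set x | f x != 0%R]).

Definition mint (nu : {measure set (borel X) -> \bar R}) (f : X -> R) : \bar R :=
  \int[nu]_(y in setT) (f y)%:E.

Definition potential (kappa : X * X -> \bar R) (x : X)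
  (nu : {measure set (borel X) -> \bar R}) : \bar R :=
  \int[nu]_(y in setT) kappa (x, y).

End defs.

(* Main.v *)
Require Import Defs.
From HB Require Import structures.
From mathcomp Require Import all_boot all_order all_algebra.
From mathcomp Require Import all_classical all_reals all_analysis.
From mathcomp Require Import measurable_realfun.
Set Implicit Arguments. Unset Strict Implicit. Unset Printing Implicit Defensive.
Import Order.TTheory GRing.Theory Num.Theory.
Import numFieldNormedType.Exports.
Local Open Scope classical_set_scope.
Local Open Scope ring_scope.

From mathcomp Require Import lra.
Section T8.
Context d (T : measurableType d) (R : realType).
Local Open Scope ereal_scope.

Lemma int_close (nu : {measure set T -> \bar R}) (N : set T) (b c M : R)
  (g : T -> \bar R) (f : T -> R) :
  measurable N -> nu N = 0 -> nu setT <= b%:E -> (0 <= c)%R ->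
  measurable_fun setT g -> measurable_fun setT f -> (forall y, `|f y| <= M)%R ->
  (forall y, ~ N y -> g y \is a fin_num /\ (`|fine (g y) - f y| <= c)%R) ->
  exists r s, \int[nu]_(y in setT) g y = r%:E /\
    \int[nu]_(y in setT) (f y)%:E = s%:E /\ (`|r - s| <= c * b)%R.
Proof.
move=> mN nuN nub c0 mg mf fM gf.
have mD : measurable (setT `\` N) by exact: measurableD.
have mEf : measurable_fun setT (EFin \o f) by exact/measurable_EFinP.
have nuDb : nu (setT `\` N) <= b%:E.
  by apply: le_trans nub; apply: le_measure => //; rewrite inE.
have nuDfin : nu (setT `\` N) \is a fin_num.
  rewrite ge0_fin_numE//; exact: le_lt_trans nuDb (ltry _).
have M0 : (0 <= M)%R by apply: le_trans (fM point).
have ig : nu.-integrable setT g.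
  apply/integrableP; split => //.
  rewrite (ge0_negligible_integral _ _ _ _ nuN)//; last exact: measurableT_comp.
  apply: (@le_lt_trans _ _ (\int[nu]_(y in setT `\` N) (cst (M + c)%:E) y)).
    apply: ge0_le_integral => //.
    - by apply: measurable_funTS; exact: measurableT_comp.
    - move=> y [_ Ny]; have [gfin gfc] := gf y Ny.
      rewrite -(fineK gfin) abse_EFin lee_fin.
      rewrite -(subrK (f y) (fine (g y))).
      apply: le_trans (ler_normD _ _) _.
      by rewrite addrC lerD.
  by rewrite integral_cst// -(fineK nuDfin) -EFinM ltry.
have iF : nu.-integrable setT (EFin \o f).
  apply/integrableP; split => //.
  apply: (@le_lt_trans _ _ (\int[nu]_(y in setT) (cst M%:E) y)).
    apply: ge0_le_integral => //.
    - exact: measurableT_comp.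
    - by move=> y _ /=; rewrite lee_fin.
  rewrite integral_cst//.
  have : nu setT \is a fin_num.
    rewrite ge0_fin_numE//; exact: le_lt_trans nub (ltry _).
  by move=> /fineK <-; rewrite -EFinM ltry.
have igD := integrableS measurableT mD (@subsetT _ _) ig.
have iFD := integrableS measurableT mD (@subsetT _ _) iF.
have gfin := integrable_fin_num measurableT ig.
have ffin := integrable_fin_num measurableT iF.
exists (fine (\int[nu]_(y in setT) g y)), (fine (\int[nu]_(y in setT) (f y)%:E)).
split; first by rewrite fineK.
split; first by rewrite fineK.
rewrite -lee_fin -abse_EFin EFinB !fineK//.
rewrite (negligible_integral _ _ ig nuN)// (negligible_integral _ _ iF nuN)//.
rewrite -integralB//.
apply: le_trans (le_abse_integral _ _ _) _ => //.
  by apply: emeasurable_funB; exact: measurable_funTS.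
apply: le_trans (integral_le_bound c%:E _ _ _ _) _ => //.
- apply: emeasurable_funB; exact: measurable_funTS.
- apply: aeW => y [_ Ny] /=; have [gfin' gfc] := gf y Ny.
  by rewrite -(fineK gfin') /= lee_fin.
- by rewrite EFinM lee_wpmul2l// lee_fin.
Qed.
End T8.
Section psi.
Context {X : ptopologicalType} {R : realType}.
Hypothesis lcpt : locally_compact [set: X].
Hypothesis hsdf : hausdorff_space X.

Lemma psi_exists (C : set X) (x0 : X) : compact C -> ~ C x0 ->
  exists psi : X -> R, [/\ continuous psi, (forall x, 0 <= psi x <= 1),
    (forall x, C x -> psi x = 1), (\forall y \near x0, psi y = 0) &
    compact (closure [set x | psi x != 0])].
Proof.
move=> cC Cx0.
pose T := one_point_compactification X.
have hT : hausdorff_space T by exact: one_point_compactification_hausdorff.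
have nT : normal_space T.
  by apply: compact_normal => //; exact: one_point_compactification_compact.
pose A : set T := Some @` C.
pose B : set T := [set None] `|` [set Some x0].
have cA : closed A.
  apply: compact_closed => //; apply: continuous_compact => //.
  apply: continuous_subspaceT; exact: one_point_compactification_some_continuous.
have cB : closed B.
  by apply: closedU; apply: accessible_closed_set1; exact: hausdorff_accessible.
have AB0 : A `&` B = set0.
  apply/seteqP; split => // z [[x Cx <-]] [//|[]] xx0.
  by apply: Cx0; rewrite -xx0.
have /(@uniform_separatorP _ R) [g [gc g01 gA gB]] :=
  (proj1 (@normal_separatorP R T) nT) A B cA cB AB0.
have gA0 x : C x -> g (Some x) = 0 by move=> Cx; apply: gA; exists (Some x) => //; exists x.
have gB1 z : B z -> g z = 1 by move=> Bz; apply: gB; exists z.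
have g01' z : 0 <= g z <= 1.
  by have := g01 (g z) (ex_intro2 _ _ z I erefl); rewrite /= in_itv.
pose h : X -> R := fun x => 1 - 2 * g (Some x).
have hc : continuous h.
  move=> x; rewrite /h; apply: cvgB; first exact: cvg_cst.
  apply: cvgM; first exact: cvg_cst.
  exact: (continuous_comp (@one_point_compactification_some_continuous X x) (gc _)).
exists (fun x => Num.max 0 (h x)); split.
- move=> x; apply: (@continuous_max R X (cst 0) h x); first exact: cvg_cst.
  exact: hc.
- move=> x; rewrite le_max lexx /= ge_max ler01 /h /=.
  by rewrite lerBlDr lerDl mulr_ge0 //; case/andP: (g01' (Some x)).
- by move=> x Cx; rewrite /h gA0 // mulr0 subr0 max_r // ler01.
- have hx0 : h x0 < 0.
    by rewrite /h gB1 ?mulr1; [rewrite subr_lt0 ltr1n | right].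
  have := @cvgr_lt R X (nbhs x0) _ h (h x0) (hc x0) 0 hx0.
  move=> H; near=> y; apply/max_l/ltW; near: y; exact: H.
- have gSc : continuous (fun x => g (Some x)).
    by move=> x; exact: (continuous_comp (@one_point_compactification_some_continuous X x) (gc _)).
  pose S := [set x : X | g (Some x) <= 2^-1].
  have cS : closed S.
    apply: (@preimage_closed _ _ (fun x => g (Some x)) [set r : R | r <= 2^-1]).
      by move=> x _; exact: gSc.
    exact: closed_le.
  have oU : open [set z : T | 2^-1 < g z].
    by apply: (@open_comp _ _ g [set r : R | 2^-1 < r]); [move=> z _; exact: gc | exact: open_gt].
  have : nbhs (None : T) [set z : T | 2^-1 < g z].
    apply: open_nbhs_nbhs; split => //=.
    by rewrite gB1; [rewrite invf_lt1 // ltr1n | left].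
  case=> W [cptW clW] WU.
  have SW : S `<=` W.
    move=> x Sx; apply: contrapT => Wx.
    have : 2^-1 < g (Some x) by apply: WU; left; exists x.
    by rewrite ltNge Sx.
  apply: (subclosed_compact _ cptW) => //; first exact: closed_closure.
  apply: subset_trans SW.
  rewrite (closure_id S).1 //; apply: closureS => x /=.
  apply: contraNT; rewrite -ltNge => gx.
  by rewrite max_l // /h subr_le0 -ler_pdivrMl // mulr1 ltW.
Unshelve. all: by end_near. Qed.
End psi.
Section meas.
Context {X : ptopologicalType} {R : realType}.

Lemma borel_open (U : set X) : open U -> measurable (U : set (borel X)).
Proof. by move=> oU; exact: sub_sigma_algebra. Qed.

Lemma cont_meas (f : X -> R) : continuous f -> measurable_fun setT (f : borel X -> R).
Proof.
move=> cf; apply: (measurability _ (RGenOInfty.measurableE R)).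
move=> /= _ [_ [x ->] <-]; apply: measurableI => //.
apply: borel_open; apply: open_comp; [by move=> y _; exact: cf | exact: rray_open].
Qed.

Lemma pair_cont (x : X) : continuous (fun y : X => (x, y)).
Proof. by move=> y; apply: cvg_pair => /=; [exact: cvg_cst|exact: cvg_id]. Qed.

Lemma lsc_meas (kappa : X * X -> \bar R) (x : X) : lower_semicontinuous kappa ->
  measurable_fun setT ((fun y => kappa (x, y)) : borel X -> \bar R).
Proof.
move=> /lower_semicontinuousP lk.
apply: (measurability _ (ErealGenOInfty.measurableE R)).
move=> /= _ [_ [a ->] <-]; apply: measurableI => //.
apply: borel_open; rewrite preimage_itvoy.
have -> : [set y | (a%:E < kappa (x, y))%E] = (fun y => (x,y)) @^-1` [set z | (a%:E < kappa z)%E] by [].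
apply: open_comp; [move=> y _; exact: pair_cont | exact: lk].
Qed.
End meas.

Section approx.
Context {X : ptopologicalType} {R : realType}.

Lemma approx (kappa : X * X -> \bar R) (F Q : set X) (x0 : X) :
  locally_compact [set: X] -> hausdorff_space X ->
  (forall x y, x <> y -> kappa (x, y) \is a fin_num /\ {for (x, y), continuous kappa}) ->
  (forall eps : R, 0 < eps -> forall K : set X, compact K ->
     exists K' : set X, compact K' /\
       forall x y, K x -> ~ K' y -> (`|kappa (x, y)| < eps%:E)%E) ->
  closed F -> Q `<=` ~` F -> Q x0 ->
  forall eps : R, 0 < eps ->
  exists U, nbhs x0 U /\ exists (f : X -> R) (M : R), [/\ Cc f, (forall y, `|f y| <= M) &
   forall x y, U x -> Q x -> F y ->
     kappa (x, y) \is a fin_num /\ `|fine (kappa (x, y)) - f y| <= eps].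
Proof.
move=> lcpt hsdf hfin hinf clF QF Qx0 eps e0.
have Fx0 : ~ F x0 := QF _ Qx0.
have [N Nx0 [cN clN]] := lcpt x0 I.
have nN : nbhs x0 N.
  by apply: (@filterS X (nbhs x0) _ (fun y => setT y -> N y)) Nx0 => y; apply.
have e20 : 0 < eps / 2 by rewrite divr_gt0.
have [K' [cK' hK']] := hinf (eps / 2) e20 N cN.
pose C := K' `&` F.
have cC : compact C by exact: compact_closedI.
have nCx0 : ~ C x0 by case.
have [psi [psic psi01 psiC psix0 psisupp]] := @psi_exists X R lcpt hsdf C x0 cC nCx0.
pose k0 := fun y => fine (kappa (x0, y)).
pose f := fun y => psi y * k0 y.
have fc : continuous f.
  move=> y; have [->|yx0] := pselect (y = x0).
    apply: cvg_near_cst; near=> z.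
    rewrite /f; have -> : psi z = 0 by near: z; exact: psix0.
    by rewrite (nbhs_singleton psix0) !mul0r.
  have x0y : x0 <> y by move=> e; apply: yx0.
  have [kf kc] := hfin x0 y x0y.
  rewrite /continuous_at /f; apply: cvgM; first exact: psic.
  suff H : (fun z => kappa (x0, z)) @ y --> (fine (kappa (x0, y)))%:E.
    by have := fine_cvg H; apply.
  rewrite fineK//.
  exact: (continuous_comp (@pair_cont X x0 y) kc).
have fsub : [set y | f y != 0] `<=` [set y | psi y != 0].
  by move=> y /=; apply: contraNN; rewrite /f => /eqP ->; rewrite mul0r.
have fCc : Cc f.
  split => //; apply: (subclosed_compact _ psisupp); first exact: closed_closure.
  exact: closureS.
have [M fM] : exists M, forall y, `|f y| <= M.
  have := compact_bounded (continuous_compact (continuous_subspaceT fc) psisupp).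
  case=> M0 [_ HM]; have M01 : M0 < M0 + 1 by rewrite ltrDl.
  have {}HM := HM _ M01.
  exists (Num.max (M0 + 1) 0) => y; rewrite le_max.
  have [py|py] := boolP (psi y != 0).
    apply/orP; left; apply: HM; exists y => //; exact: subset_closure.
  apply/orP; right; move: py; rewrite negbK => /eqP py.
  by rewrite /f py mul0r normr0.
have tube : \forall i \near x0, C `<=` (fun y => kappa (i, y) \is a fin_num /\
    `|fine (kappa (i, y)) - k0 y| < eps).
  apply: (proj1 (compact_near_coveringP C) cC X (nbhs x0)
    (fun i y => kappa (i, y) \is a fin_num /\ `|fine (kappa (i, y)) - k0 y| < eps)).
  move=> y [_ Fy].
  have x0y : x0 <> y by move=> e; apply: Fx0; rewrite e.
  have [kf kc] := hfin x0 y x0y.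
  have /fine_cvgP [nfin fcv] : kappa @ (x0, y) --> (fine (kappa (x0, y)))%:E.
    by rewrite fineK.
  have ncl : \forall p \near (x0, y), kappa p \is a fin_num /\
      `|fine (kappa (x0, y)) - fine (kappa p)| < eps / 2.
    near=> p; split; first by near: p; exact: nfin.
    by near: p; move/cvgrPdist_lt : fcv => /(_ _ e20).
  case: ncl => -[A B] /= [nA nB] AB.
  exists (B, A) => //= -[y' i] /= [By' Ai].
  have [fi di] := AB (i, y') (conj Ai By').
  have [_ d0] := AB (x0, y') (conj (nbhs_singleton nA) By').
  split => //; rewrite /k0.
  apply: le_lt_trans (ler_distD (fine (kappa (x0, y))) _ _) _.
  by rewrite (splitr eps) ltrD // distrC.
exists (N `&` [set i | C `<=` (fun y => kappa (i, y) \is a fin_num /\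
    `|fine (kappa (i, y)) - k0 y| < eps)]).
split; first exact: filterI.
exists f, M; split => // x y [Nx tx] Qx Fy.
have xy : x <> y by move=> e; apply: (QF _ Qx); rewrite e.
have [kfin _] := hfin x y xy.
split => //.
have [K'y|K'y] := pselect (K' y).
  have [_ lt] := tx y (conj K'y Fy).
  by rewrite /f psiC ?mul1r; [exact: ltW | split].
have x0y : x0 <> y by move=> e; apply: Fx0; rewrite e.
have [k0fin _] := hfin x0 y x0y.
have h1 := hK' x y Nx K'y.
have h2 := hK' x0 y (nbhs_singleton nN) K'y.
rewrite -(fineK kfin) abse_EFin lte_fin in h1.
rewrite -(fineK k0fin) abse_EFin lte_fin in h2.
apply: le_trans (ler_normB _ _) _.
rewrite (splitr eps) lerD ?ltW // /f normrM.
have /andP [p0 p1] := psi01 y.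
rewrite (ger0_norm p0); exact: le_lt_trans (ler_piMl (normr_ge0 _) p1) _.
Unshelve. all: by end_near. Qed.
End approx.

Lemma three4 (R : realType) (e : R) : 0 < e -> e / 4 + e / 4 + e / 4 < e.
Proof. move=> ?; lra. Qed.

Unset Implicit Arguments.
Set Strict Implicit.

Theorem lemma3p5 (X : ptopologicalType) (R : realType)
  (kappa : X * X -> \bar R) (F Q : set X) (b : R) :
  locally_compact [set: X] ->
  hausdorff_space X ->
  lower_semicontinuous kappa ->
  (forall z, kappa z != -oo%E) ->
  (~ compact [set: X * X] -> forall z, (0 <= kappa z)%E) ->
  (forall x y, x <> y -> kappa (x, y) \is a fin_num /\ {for (x, y), continuous kappa}) ->
  (forall eps : R, 0 < eps -> forall K : set X, compact K ->
     exists K' : set X, compact K' /\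
       forall x y, K x -> ~ K' y -> (`|kappa (x, y)| < eps%:E)%E) ->
  closed F -> closed Q -> Q `<=` ~` F -> 0 < b ->
  forall (x0 : X) (nu0 : {measure set (borel X) -> \bar R}),
    Q x0 -> in_MFb F b nu0 ->
    forall V : set (\bar R), nbhs (potential kappa x0 nu0) V ->
    exists U : set X, nbhs x0 U /\
      exists (n : nat) (f : 'I_n -> X -> R) (delta : R),
        [/\ (forall i, Cc (f i)), 0 < delta &
            forall (x : X) (nu : {measure set (borel X) -> \bar R}),
              Q x -> in_MFb F b nu -> U x ->
              (forall i, (`|mint nu (f i) - mint nu0 (f i)| < delta%:E)%E) ->
              V (potential kappa x nu)].

Proof.
move=> lcpt hsdf lsc _ _ hfin hinf clF clQ QF b0 x0 nu0 Qx0 hMF0 V nV.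
have mN : measurable (~` F : set (borel X)) by apply: borel_open; exact: closed_openC.
have key : forall eps : R, 0 < eps -> exists U, nbhs x0 U /\ exists (f : X -> R) (M : R),
    Cc f /\ forall x nu, U x -> Q x -> in_MFb F b nu ->
    exists r s, potential kappa x nu = r%:E /\ mint nu f = s%:E /\ `|r - s| <= eps * b.
  move=> eps e0.
  have [U [nU [f [M [fCc fM hU]]]]] := approx lcpt hsdf hfin hinf clF QF Qx0 e0.
  exists U; split => //; exists f, M; split => // x nu Ux Qx [_ nuF nub].
  apply: (int_close mN nuF nub (ltW e0) (lsc_meas x lsc) (cont_meas fCc.1) fM).
  move=> y nFy; have Fy : F y by apply: contrapT.
  exact: hU x y Ux Qx Fy.
have [U1 [nU1 [f1 [M1 [_ h1]]]]] := key 1 ltr01.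
have [r0 [s1 [P0 _]]] := h1 x0 nu0 (nbhs_singleton nU1) Qx0 hMF0.
rewrite P0 in nV.
move/nbhs_EFin : nV => /nbhs_ballP [e /= e0 He].
have e4 : 0 < e / (4 * b) by rewrite divr_gt0 // mulr_gt0.
have [U [nU [f [M [fCc hU]]]]] := key _ e4.
exists U; split => //; exists 1%N, (fun _ => f), (e / 4); split => //.
  by rewrite divr_gt0.
move=> x nu Qx hMF Ux hclose.
have [r [s [Pr [Ms rs]]]] := hU x nu Ux Qx hMF.
have [r0' [s0 [Pr0 [Ms0 rs0]]]] := hU x0 nu0 (nbhs_singleton nU) Qx0 hMF0.
have r00 : r0' = r0 by apply/EFin_inj; rewrite -Pr0 P0.
subst r0'.
have := hclose ord0; rewrite Ms Ms0 -EFinB abse_EFin lte_fin => ss0.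
rewrite Pr; apply: He; rewrite /ball /=.
have eb : e / (4 * b) * b = e / 4.
  by rewrite invfM mulrA divfK // gt_eqF.
rewrite eb in rs rs0.
have -> : r0 - r = (r0 - s0) + (s0 - s) + (s - r) by rewrite !addrA subrK subrK.
apply: le_lt_trans (ler_normD _ _) _.
apply: (@le_lt_trans _ _ (e / 4 + e / 4 + e / 4)).
  apply: lerD; last by rewrite distrC.
  apply: le_trans (ler_normD _ _) _; apply: lerD => //.
  by rewrite distrC ltW.
exact: three4.
Qed.
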